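(* Let $n\ge 1$ and consider a radial distribution network whose matrices are $\mathbf{R}=\mathbf{M}^{-T}\mathbf{D}_r\mathbf{M}^{-1}$ and $\mathbf{X}=\mathbf{M}^{-T}\mathbf{D}_x\mathbf{M}^{-1}$, where $\mathbf{M}\in\mathbb{R}^{n\times n}$ is an invertible matrix determined by the network topology and $\mathbf{D}_r,\mathbf{D}_x$ are diagonal matrices with positive diagonal entries given by the resistances and reactances of the power lines (so $\mathbf{R},\mathbf{X}$ are positive definite). Suppose the ratio of resistance to reactance of every power line equals the same constant $\rho>0$. Let $v_0\in\mathbb{R}$ be fixed, $\mathbf{1}\in\mathbb{R}^n$ the all-ones vector, $\mathbf{v}^{ref}\in\mathbb{R}^n$ fixed, and consider the dynamics in which $\mathbf{v}_t=\mathbf{R}\mathbf{p}_t+\mathbf{X}\mathbf{q}_t+v_0\mathbf{1}$, $\tilde{\mathbf{v}}_t=\mathbf{v}_t-\mathbf{v}^{ref}$, and for each node $i$ and $t\ge1$, $$p_{i,t}=p_{i,t-1}-k_i^p\,\tilde v_{i,t-1},\qquad q_{i,t}=q_{i,t-1}-k_i^q\,\tilde v_{i,t-1},$$ so that $\tilde{\mathbf{v}}_t=(\mathbf{I}-\mathbf{R}\mathbf{K}^p-\mathbf{X}\mathbf{K}^q)\tilde{\mathbf{v}}_{t-1}$, where $\mathbf{K}^p=\mathrm{diag}(k_1^p,\dots,k_n^p)$ and $\mathbf{K}^q=\mathrm{diag}(k_1^q,\dots,k_n^q)$. If $$0\prec \rho\mathbf{K}^p+\mathbf{K}^q\prec 2\mathbf{X}^{-1}$$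 (in the positive definite ordering), then the equilibrium $\tilde{\mathbf{v}}=0$ of this dynamical system is locally exponentially stable.
   Context: This models the internal power distribution network of a data center under the Linear DistFlow approximation: $p_i,q_i$ are active and reactive power injections at node $i$, $v_i$ the node voltage, $v_0$ the root voltage at the point of connection to the transmission grid. The notation $\mathbf{A}\prec\mathbf{B}$ means $\mathbf{B}-\mathbf{A}$ is positive definite. *)

(* Defs.v *)
From HB Require Import structures.
From mathcomp Require Import all_boot all_order all_algebra.
Set Implicit Arguments. Unset Strict Implicit. Unset Printing Implicit Defensive.
Import Order.TTheory GRing.Theory Num.Theory.
Local Open Scope ring_scope.

Definition posdef (R : numDomainType) (n : nat) (A : 'M[R]_n) : Prop :=
  A^T = A /\ forall x : 'cV[R]_n, x != 0 -> 0 < (x^T *m A *m x) 0 0.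

Definition mx_lt (R : numDomainType) (n : nat) (A B : 'M[R]_n) : Prop :=
  posdef (B - A).

Definition vnorm (R : numDomainType) (n : nat) (v : 'cV[R]_n) : R :=
  \big[Num.max/0]_(i < n) `|v i 0|.

Definition vtilde_of (R : numDomainType) (n : nat) (Rm Xm : 'M[R]_n) (v0 : R)
  (vref p q : 'cV[R]_n) : 'cV[R]_n :=
  Rm *m p + Xm *m q + const_mx v0 - vref.

Fixpoint pq_traj (R : numDomainType) (n : nat) (Rm Xm Kp Kq : 'M[R]_n) (v0 : R)
  (vref p0 q0 : 'cV[R]_n) (t : nat) : 'cV[R]_n * 'cV[R]_n :=
  match t with
  | 0 => (p0, q0)
  | t'.+1 =>
      let pq := pq_traj Rm Xm Kp Kq v0 vref p0 q0 t' in
      let vt := vtilde_of Rm Xm v0 vref pq.1 pq.2 in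
      (pq.1 - Kp *m vt, pq.2 - Kq *m vt)
  end.

Definition vtilde_traj (R : numDomainType) (n : nat) (Rm Xm Kp Kq : 'M[R]_n) (v0 : R)
  (vref p0 q0 : 'cV[R]_n) (t : nat) : 'cV[R]_n :=
  let pq := pq_traj Rm Xm Kp Kq v0 vref p0 q0 t in
  vtilde_of Rm Xm v0 vref pq.1 pq.2.

Definition loc_exp_stable (R : numDomainType) (n : nat) (Rm Xm Kp Kq : 'M[R]_n)
  (v0 : R) (vref : 'cV[R]_n) : Prop :=
  exists (delta C lam : R), 0 < delta /\ 0 < C /\ 0 < lam /\ lam < 1 /\
    forall p0 q0 : 'cV[R]_n,
      vnorm (vtilde_traj Rm Xm Kp Kq v0 vref p0 q0 0) < delta ->
      forall t : nat,
        vnorm (vtilde_traj Rm Xm Kp Kq v0 vref p0 q0 t)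
          <= C * lam ^+ t * vnorm (vtilde_traj Rm Xm Kp Kq v0 vref p0 q0 0).

(* Main.v *)
Require Import Defs.
From HB Require Import structures.
From mathcomp Require Import all_boot all_order all_algebra.
From mathcomp Require Import ring lra.
Import Order.TTheory GRing.Theory Num.Theory.
Local Open Scope ring_scope.

Section Aux.
Set Implicit Arguments. Unset Strict Implicit.
Variable R : rcfType.
Variable n : nat.

Definition qf (Q : 'M[R]_n) (x y : 'cV[R]_n) : R := (x^T *m Q *m y) 0 0.

Lemma qfDl Q x y z : qf Q (x + y) z = qf Q x z + qf Q y z.
Proof. by rewrite /qf linearD /= !mulmxDl mxE. Qed.
Lemma qfDr Q x y z : qf Q z (x + y) = qf Q z x + qf Q z y.
Proof. by rewrite /qf mulmxDr mxE. Qed.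
Lemma qfZl Q a x z : qf Q (a *: x) z = a * qf Q x z.
Proof. by rewrite /qf linearZ /= -!scalemxAl mxE. Qed.
Lemma qfZr Q a x z : qf Q z (a *: x) = a * qf Q z x.
Proof. by rewrite /qf -scalemxAr mxE. Qed.
Lemma qfNl Q x z : qf Q (- x) z = - qf Q x z.
Proof. by rewrite -scaleN1r qfZl mulN1r. Qed.
Lemma qfNr Q x z : qf Q z (- x) = - qf Q z x.
Proof. by rewrite -scaleN1r qfZr mulN1r. Qed.
Lemma qfQD P Q x z : qf (P + Q) x z = qf P x z + qf Q x z.
Proof. by rewrite /qf mulmxDr mulmxDl mxE. Qed.
Lemma qfQN Q x z : qf (- Q) x z = - qf Q x z.
Proof. by rewrite /qf mulmxN mulNmx mxE. Qed.
Lemma qfQZ a Q x z : qf (a *: Q) x z = a * qf Q x z.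
Proof. by rewrite /qf -scalemxAr -scalemxAl mxE. Qed.
Lemma qf_sym Q x y : Q^T = Q -> qf Q x y = qf Q y x.
Proof.
move=> hQ; rewrite /qf.
have -> : (x^T *m Q *m y) 0 0 = ((x^T *m Q *m y)^T) 0 0 :> R by rewrite [RHS]mxE.
by rewrite !trmx_mul trmxK hQ mulmxA.
Qed.

Lemma posdef_ge0 (Q : 'M[R]_n) : posdef Q -> forall x, 0 <= qf Q x x.
Proof.
case=> _ hQ x; have [->|nz] := eqVneq x 0.
  by rewrite /qf mulmx0 mxE.
exact/ltW/hQ.
Qed.

Lemma posdef_unit (Q : 'M[R]_n) : posdef Q -> Q \in unitmx.
Proof.
case=> sQ hQ; rewrite -row_free_unit -kermx_eq0; apply/eqP/row_matrixP => i.
rewrite row0; set u := row i (kermx Q).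
have uQ : u *m Q = 0 by rewrite /u -row_mul mulmx_ker row0.
have [h|unz] := eqVneq u^T 0.
  by rewrite -[u]trmxK h linear0.
move: (hQ _ unz); rewrite trmxK uQ mul0mx mxE ltxx //.
Qed.

Lemma CS (Q : 'M[R]_n) x y : posdef Q -> qf Q x y ^+ 2 <= qf Q x x * qf Q y y.
Proof.
move=> hP; have [sQ hQ] := hP.
have [->|nz] := eqVneq y 0.
  have z : qf Q x 0 = 0 by rewrite /qf mulmx0 mxE.
  have z' : qf Q 0 0 = 0 by rewrite /qf mulmx0 mxE.
  by rewrite z z' expr0n mulr0.
have c0 : 0 < qf Q y y by exact: hQ.
have := posdef_ge0 hP (qf Q y y *: x + (- qf Q x y) *: y).
rewrite !qfDl !qfDr !qfZl !qfZr (qf_sym y x sQ) => h.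
have : 0 <= qf Q y y * (qf Q x x * qf Q y y - qf Q x y ^+ 2) by nra.
by rewrite pmulr_rge0 // subr_ge0.
Qed.

Lemma lyap_id (X Xi K : 'M[R]_n) v : X^T = X -> K^T = K -> X *m Xi = 1%:M ->
  qf K (v - X *m (K *m v)) (v - X *m (K *m v)) =
  qf K v v - qf (2%:R *: Xi - K) (X *m (K *m v)) (X *m (K *m v)).
Proof.
move=> sX sK hXi; set w := X *m (K *m v).
have e1 : qf Xi w w = qf K v w.
  by rewrite /qf /w !trmx_mul sX sK -!mulmxA (mulmxA X Xi) hXi mul1mx.
rewrite qfQD qfQN qfQZ e1 !qfDl !qfDr !qfNl !qfNr (qf_sym w v sK).
ring.
Qed.

Lemma vnorm_ge0 (v : 'cV[R]_n) : 0 <= vnorm v.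
Proof.
rewrite /vnorm; apply: (big_ind (fun x => 0 <= x)) => //.
by move=> x y hx hy; rewrite le_max hx.
Qed.

Lemma vnorm_ge (v : 'cV[R]_n) i : `|v i 0| <= vnorm v.
Proof. exact: (le_bigmax _ (fun i => `|v i 0|)). Qed.

Lemma vnorm_sq_le (v : 'cV[R]_n) B :
  (forall i, `|v i 0| ^+ 2 <= B) -> 0 <= B -> vnorm v ^+ 2 <= B.
Proof.
move=> H B0; rewrite /vnorm.
suff [] : 0 <= \big[Num.max/0]_(i < n) `|v i 0| /\ (\big[Num.max/0]_(i < n) `|v i 0|) ^+ 2 <= B by [].
apply: (big_ind (fun x => 0 <= x /\ x ^+ 2 <= B)).
- by rewrite expr0n.
- by move=> x y [] ?? [] ??; rewrite maxEle; case: ifP.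
- by move=> i _; split.
Qed.

Lemma le_sum1 (F : 'I_n -> R) j : (forall i, 0 <= F i) -> F j <= \sum_i F i.
Proof.
move=> H; rewrite (bigD1 j) //= lerDl; exact: sumr_ge0.
Qed.

Lemma mulmx_bound (N : 'M[R]_n) (w : 'cV[R]_n) j :
  `|(N *m w) j 0| <= (\sum_i `|N j i|) * vnorm w.
Proof.
rewrite mxE mulr_suml; apply: le_trans (ler_norm_sum _ _ _) _.
apply: ler_sum => i _; rewrite normrM; apply: ler_wpM2l => //; exact: vnorm_ge.
Qed.

Lemma qf_diag (d : 'rV[R]_n) x : qf (diag_mx d) x x = \sum_i d 0 i * x i 0 ^+ 2.
Proof.
rewrite /qf mul_mx_diag mxE; apply: eq_bigr => i _; rewrite !mxE; ring.
Qed.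

Lemma qf_delta (Q : 'M[R]_n) i : qf Q (delta_mx i 0) (delta_mx i 0) = Q i i.
Proof. by rewrite /qf trmx_delta -rowE -colE !mxE. Qed.

Lemma delta_neq0 (i : 'I_n) : delta_mx i 0 != 0 :> 'cV[R]_n.
Proof.
apply/eqP => /matrixP /(_ i 0); rewrite !mxE !eqxx /= => /eqP; by rewrite oner_eq0.
Qed.

End Aux.
Unset Implicit Arguments. Set Strict Implicit.

Lemma zmod_step (V : zmodType) (a b c d e f : V) :
  (a - e) + (b - f) + c - d = (a + b + c - d) - (e + f).
Proof.
by rewrite addrACA -opprD (addrAC (a + b)) (addrAC (a + b + c)).
Qed.

Theorem theorem4p2 (R : rcfType) (n : nat) (hn : (0 < n)%N)
  (M : 'M[R]_n) (dr dx : 'rV[R]_n) (rho v0 : R) (vref : 'cV[R]_n)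
  (kp kq : 'rV[R]_n) :
  M \in unitmx ->
  (forall i, 0 < dr 0 i) -> (forall i, 0 < dx 0 i) ->
  0 < rho -> (forall i, dr 0 i = rho * dx 0 i) ->
  let Rm := (invmx M)^T *m diag_mx dr *m invmx M in
  let Xm := (invmx M)^T *m diag_mx dx *m invmx M in
  let Kp := diag_mx kp in
  let Kq := diag_mx kq in
  mx_lt 0 (rho *: Kp + Kq) ->
  mx_lt (rho *: Kp + Kq) (2%:R *: invmx Xm) ->
  loc_exp_stable Rm Xm Kp Kq v0 vref.
Proof.
move=> hM hdr hdx hrho hdrx Rm Xm Kp Kq hK hQ.
set kk := rho *: kp + kq.
have eK : rho *: Kp + Kq = diag_mx kk by rewrite /kk /Kp /Kq linearD linearZ.
set K := diag_mx kk.
have eR : Rm = rho *: Xm.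
  rewrite /Rm /Xm.
  have -> : diag_mx dr = rho *: diag_mx dx.
    by apply/matrixP => i j; rewrite !mxE hdrx mulrnAr.
  by rewrite -scalemxAr -scalemxAl.
have XT : Xm^T = Xm by rewrite /Xm !trmx_mul trmxK tr_diag_mx mulmxA.
have Xu : Xm \in unitmx.
  rewrite /Xm !unitmx_mul unitmx_tr unitmx_inv hM /= andbT unitmxE det_diag unitfE.
  by apply: lt0r_neq0; apply: prodr_gt0.
have KP : posdef K by move: hK; rewrite /mx_lt subr0 eK.
have kpos i : 0 < kk 0 i.
  have := KP.2 _ (delta_neq0 R i); rewrite -/(qf K _ _) qf_delta /K mxE eqxx mulr1n //.
have Ku : K \in unitmx.
  by rewrite unitmxE det_diag unitfE; apply: lt0r_neq0; apply: prodr_gt0.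
set Xi := invmx Xm.
set Q := 2%:R *: Xi - K.
have QP : posdef Q by move: hQ; rewrite /mx_lt eK.
have Qu := posdef_unit QP.
have sK : K^T = K by rewrite tr_diag_mx.
have XXi : Xm *m Xi = 1%:M by rewrite mulmxV.
set N := invmx K *m Xi.
set kS := \sum_i kk 0 i.
set kI := \sum_i (kk 0 i)^-1.
set qs := \sum_i invmx Q i i.
set Nabs := \sum_j \sum_i `|N j i|.
set D := kS * Nabs ^+ 2 * qs.
set mu := (D + 1) / (D + 2).
have qpos i : 0 <= invmx Q i i.
  have := posdef_ge0 QP (invmx Q *m delta_mx i 0).
  by rewrite /qf -mulmxA (mulmxA Q) mulmxV // mul1mx -!colE !mxE.
have kS0 : 0 < kS.
  apply: (lt_le_trans (kpos (Ordinal hn))); rewrite /kS; apply: le_sum1 => j; exact/ltW.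
have kI0 : 0 < kI.
  apply: (lt_le_trans (y := (kk 0 (Ordinal hn))^-1)); first by rewrite invr_gt0.
  rewrite /kI; apply: le_sum1 => j; rewrite invr_ge0; exact/ltW.
have qs0 : 0 <= qs by apply: sumr_ge0.
have Nabs0 : 0 <= Nabs by apply: sumr_ge0 => j _; apply: sumr_ge0.
have D0 : 0 <= D by rewrite /D !mulr_ge0 ?exprn_ge0 ?(ltW kS0).
have mu0 : 0 < mu by rewrite /mu divr_gt0 // ltr_wpDl.
have mu1 : mu < 1 by rewrite /mu ltr_pdivrMr ?mul1r ?ltrD2l ?ltr1n // ltr_wpDl.
have key v : qf K (v - Xm *m (K *m v)) (v - Xm *m (K *m v)) <= mu * qf K v v.
  rewrite (lyap_id (Xi := Xi)) // -/Q.
  set w := Xm *m (K *m v).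
  set E := qf Q w w. set V := qf K v v.
  have E0 : 0 <= E := posdef_ge0 QP w.
  have V0 : 0 <= V := posdef_ge0 KP v.
  have hw i : `|w i 0| ^+ 2 <= qs * E.
    have cs := CS (invmx Q *m delta_mx i 0) w QP.
    have e1 : qf Q (invmx Q *m delta_mx i 0) w = w i 0.
      rewrite /qf trmx_mul trmx_inv QP.1 trmx_delta -(mulmxA (delta_mx 0 i)).
      by rewrite mulVmx // mulmx1 -rowE !mxE.
    have e2 : qf Q (invmx Q *m delta_mx i 0) (invmx Q *m delta_mx i 0) = invmx Q i i.
      by rewrite /qf -mulmxA (mulmxA Q) mulmxV // mul1mx -!colE !mxE.
    rewrite e1 e2 in cs; rewrite real_normK ?num_real //.
    apply: le_trans cs _; apply: ler_wpM2r => //; exact: (le_sum1 (F := fun k => invmx Q k k) i qpos).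
  have hwn : vnorm w ^+ 2 <= qs * E := vnorm_sq_le hw (mulr_ge0 qs0 E0).
  have vN : v = N *m w.
    rewrite /N /w -mulmxA (mulmxA Xi Xm) /Xi mulVmx // mul1mx mulmxA.
    by rewrite mulVmx // mul1mx.
  have hv j : v j 0 ^+ 2 <= Nabs ^+ 2 * (qs * E).
    have h1 := mulmx_bound N w j; rewrite -vN in h1.
    have h2 : \sum_i `|N j i| <= Nabs.
      rewrite /Nabs; apply: (le_sum1 (F := fun j => \sum_i `|N j i|)) => k; exact: sumr_ge0.
    have vn0 := vnorm_ge0 w.
    have h3 : `|v j 0| <= Nabs * vnorm w.
      apply: le_trans h1 _; exact: ler_wpM2r.
    have h4 : `|v j 0| ^+ 2 <= (Nabs * vnorm w) ^+ 2.
      by rewrite ler_sqr ?nnegrE // mulr_ge0.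
    rewrite -real_normK ?num_real //; apply: le_trans h4 _.
    by rewrite exprMn; apply: ler_wpM2l => //; apply: exprn_ge0.
  have VD : V <= D * E.
    rewrite /V qf_diag.
    apply: le_trans (ler_sum _ (fun j _ => ler_wpM2l (ltW (kpos j)) (hv j))) _.
    by rewrite -mulr_suml /D -/kS !mulrA.
  have -> : mu * V = V - V / (D + 2).
    rewrite /mu; field; apply: lt0r_neq0; apply: ltr_wpDl => //.
  rewrite lerD2l lerN2 ler_pdivrMr; last by apply: ltr_wpDl.
  nra.
exists 1, (Num.sqrt (kI * kS)), (Num.sqrt mu).
split => //; split; first by rewrite sqrtr_gt0 mulr_gt0.
split; first by rewrite sqrtr_gt0.
split; first by rewrite -sqrtr1 ltr_sqrt.
move=> p0 q0 _ t.
set vt := vtilde_traj Rm Xm Kp Kq v0 vref p0 q0.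
have step s : vt s.+1 = vt s - Xm *m (K *m vt s).
  rewrite /vt /vtilde_traj /=.
  case: (pq_traj _ _ _ _ _ _ _ _ s) => p q /=.
  have gen z : z = Rm *m p + Xm *m q + const_mx v0 - vref ->
      vtilde_of Rm Xm v0 vref (p - Kp *m z) (q - Kq *m z) = z - Xm *m (K *m z).
    move=> hz; rewrite /vtilde_of !mulmxBr [in Rm *m (Kp *m z)]eR -scalemxAl.
    rewrite /K -eK mulmxDl mulmxDr -scalemxAl -scalemxAr.
    by rewrite zmod_step -hz.
  exact: gen.
have Vstep s : qf K (vt s) (vt s) <= mu ^+ s * qf K (vt 0) (vt 0).
  elim: s => [|s IH]; first by rewrite expr0 mul1r.
  rewrite step; apply: le_trans (key _) _; rewrite exprS -mulrA.
  apply: ler_wpM2l; [exact: ltW | exact: IH].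
have V0b : qf K (vt 0) (vt 0) <= kS * vnorm (vt 0) ^+ 2.
  rewrite qf_diag /kS mulr_suml; apply: ler_sum => j _.
  apply: ler_wpM2l; first exact: ltW.
  rewrite -[vt 0 j 0 ^+ 2]real_normK ?num_real // ler_sqr ?nnegrE ?vnorm_ge0 //; exact: vnorm_ge.
have hj j : `|vt t j 0| ^+ 2 <= kI * (mu ^+ t * (kS * vnorm (vt 0) ^+ 2)).
  have Vt0 := posdef_ge0 KP (vt t).
  have a1 : kk 0 j * vt t j 0 ^+ 2 <= qf K (vt t) (vt t).
    rewrite qf_diag; apply: (le_sum1 (F := fun i => kk 0 i * vt t i 0 ^+ 2)) => i.
    by rewrite mulr_ge0 ?sqr_ge0 // ltW.
  have a2 : vt t j 0 ^+ 2 <= kI * qf K (vt t) (vt t).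
    have -> : vt t j 0 ^+ 2 = (kk 0 j)^-1 * (kk 0 j * vt t j 0 ^+ 2).
      by rewrite mulrA mulVf ?mul1r // lt0r_neq0.
    apply: le_trans (ler_wpM2l _ a1) _; first by rewrite invr_ge0 ltW.
    apply: ler_wpM2r => //; rewrite /kI.
    apply: (le_sum1 (F := fun i => (kk 0 i)^-1)) => i; rewrite invr_ge0 ltW //.
  rewrite real_normK ?num_real //; apply: le_trans a2 _.
  apply: ler_wpM2l; first exact: ltW.
  apply: le_trans (Vstep t) _; apply: ler_wpM2l => //; exact: exprn_ge0 (ltW mu0).
have B0 : 0 <= kI * (mu ^+ t * (kS * vnorm (vt 0) ^+ 2)).
  apply: mulr_ge0; first exact: ltW. apply: mulr_ge0; first exact: exprn_ge0 (ltW mu0). apply: mulr_ge0; [exact: ltW | exact: sqr_ge0].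
have hn2 := vnorm_sq_le hj B0.
have e : (Num.sqrt (kI * kS) * Num.sqrt mu ^+ t * vnorm (vt 0)) ^+ 2 =
         kI * (mu ^+ t * (kS * vnorm (vt 0) ^+ 2)).
  rewrite !exprMn sqr_sqrtr ?mulr_ge0 ?ltW // exprAC sqr_sqrtr ?ltW //.
  rewrite /mu !exprMn; ring.
rewrite -e in hn2.
have r0 : 0 <= Num.sqrt (kI * kS) * Num.sqrt mu ^+ t * vnorm (vt 0).
  by rewrite !mulr_ge0 ?sqrtr_ge0 ?exprn_ge0 ?sqrtr_ge0 ?vnorm_ge0.
have l0 := vnorm_ge0 (vt t).
by rewrite -ler_sqr ?nnegrE.
Qed.
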